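(* Let $1\to N\to G\to Q\to1$ be a short exact sequence of groups. If $G$ is SQ-universal, then $N$ or $Q$ is SQ-universal.
   Context: A group $G$ is SQ-universal if every countable group embeds in some quotient of $G$. *)

(* Defs.v *)
Record Group := {
  carrier :> Type;
  gmul : carrier -> carrier -> carrier;
  gone : carrier;
  ginv : carrier -> carrier;
  gmul_assoc : forall x y z, gmul x (gmul y z) = gmul (gmul x y) z;
  gmul_1l : forall x, gmul gone x = x;
  gmul_1r : forall x, gmul x gone = x;
  gmul_Vl : forall x, gmul (ginv x) x = gone;
  gmul_Vr : forall x, gmul x (ginv x) = gone
}.

Definition is_hom (A B : Group) (f : A -> B) : Prop :=
  forall x y : A, f (gmul A x y) = gmul B (f x) (f y).

Definition injective {A B : Type} (f : A -> B) : Prop :=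
  forall x y, f x = f y -> x = y.

Definition surjective {A B : Type} (f : A -> B) : Prop :=
  forall y, exists x, f x = y.

Definition countable (A : Type) : Prop :=
  exists f : A -> nat, injective f.

Definition short_exact (N G Q : Group) (i : N -> G) (p : G -> Q) : Prop :=
  is_hom N G i /\ is_hom G Q p /\ injective i /\ surjective p /\
  (forall g : G, p g = gone Q <-> exists n : N, i n = g).

(* G is SQ-universal: every countable group embeds in some quotient of G.
   A quotient of G is represented (up to isomorphism) as a group H together
   with a surjective homomorphism G -> H. *)
Definition SQ_universal (G : Group) : Prop :=
  forall C : Group, countable C ->
    exists (H : Group) (q : G -> H),
      is_hom G H q /\ surjective q /\
      exists e : C -> H, is_hom C H e /\ injective e.

(* Main.v *)
Require Import Defs.
From Stdlib Require Import Classical ClassicalEpsilon FunctionalExtensionality ProofIrrelevance PropExtensionality ZArith Lia List.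
From Stdlib Require Cantor.
Import ListNotations.

Lemma mulKl (G : Group) (x y : G) : gmul G (ginv G x) (gmul G x y) = y.
Proof. rewrite gmul_assoc, gmul_Vl, gmul_1l. reflexivity. Qed.
Lemma mulKr (G : Group) (x y : G) : gmul G x (gmul G (ginv G x) y) = y.
Proof. rewrite gmul_assoc, gmul_Vr, gmul_1l. reflexivity. Qed.
Lemma inv_uniq (G : Group) (x y : G) : gmul G x y = gone G -> y = ginv G x.
Proof. intros H. rewrite <- (mulKl G x y), H, gmul_1r. reflexivity. Qed.
Lemma inv_inv (G : Group) (x : G) : ginv G (ginv G x) = x.
Proof. symmetry. apply inv_uniq. apply gmul_Vl. Qed.
Lemma inv_mul (G : Group) (x y : G) : ginv G (gmul G x y) = gmul G (ginv G y) (ginv G x).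
Proof. symmetry. apply inv_uniq. rewrite <- gmul_assoc, mulKr. apply gmul_Vr. Qed.
Lemma inv_one (G : Group) : ginv G (gone G) = gone G.
Proof. symmetry. apply inv_uniq. apply gmul_1l. Qed.

Ltac gsimp := repeat (progress rewrite ?inv_mul, ?inv_inv, ?inv_one, <-?gmul_assoc,
  ?gmul_1l, ?gmul_1r, ?gmul_Vl, ?gmul_Vr, ?mulKl, ?mulKr).

Lemma hom1 (A B : Group) (f : A -> B) : is_hom A B f -> f (gone A) = gone B.
Proof.
  intros h. assert (E : f (gone A) = gmul B (f (gone A)) (f (gone A))).
  { rewrite <- h, gmul_1l. reflexivity. }
  rewrite <- (mulKl B (f (gone A)) (f (gone A))). rewrite <- E. apply gmul_Vl.
Qed.
Lemma hom_inv (A B : Group) (f : A -> B) x : is_hom A B f -> f (ginv A x) = ginv B (f x).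
Proof. intros h. apply inv_uniq. rewrite <- h, gmul_Vr. apply hom1; exact h. Qed.

Definition subG (H : Group) (M : H -> Prop) (M1 : M (gone H))
  (Mm : forall x y, M x -> M y -> M (gmul H x y)) (Mi : forall x, M x -> M (ginv H x)) : Group.
Proof.
  refine {| carrier := {h : H | M h};
            gmul := fun a b => exist _ (gmul H (proj1_sig a) (proj1_sig b)) (Mm _ _ (proj2_sig a) (proj2_sig b));
            gone := exist _ (gone H) M1;
            ginv := fun a => exist _ (ginv H (proj1_sig a)) (Mi _ (proj2_sig a)) |}.
  - intros [x px] [y py] [z pz]; apply subset_eq_compat; apply gmul_assoc.
  - intros [x px]; apply subset_eq_compat; apply gmul_1l.
  - intros [x px]; apply subset_eq_compat; apply gmul_1r.
  - intros [x px]; apply subset_eq_compat; apply gmul_Vl.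
  - intros [x px]; apply subset_eq_compat; apply gmul_Vr.
Defined.

Definition coset (H : Group) (M : H -> Prop) (h : H) : H -> Prop := fun x => M (gmul H (ginv H h) x).
Definition qcar (H : Group) (M : H -> Prop) := {X : H -> Prop | exists h, X = coset H M h}.
Definition cls (H : Group) (M : H -> Prop) (h : H) : qcar H M := exist _ (coset H M h) (ex_intro _ h eq_refl).
Definition rep (H : Group) (M : H -> Prop) (X : qcar H M) : H :=
  proj1_sig (constructive_indefinite_description _ (proj2_sig X)).
Lemma rep_spec H M X : proj1_sig X = coset H M (rep H M X).
Proof. unfold rep. destruct constructive_indefinite_description; assumption. Qed.
Lemma cls_surj H M (X : qcar H M) : exists h, X = cls H M h.
Proof. destruct X as [P [h E]]. exists h. subst. unfold cls. apply subset_eq_compat. reflexivity. Qed.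
Definition qmul H M (X Y : qcar H M) := cls H M (gmul H (rep H M X) (rep H M Y)).
Definition qinv H M (X : qcar H M) := cls H M (ginv H (rep H M X)).


Lemma cls_eq (H : Group) (M : H -> Prop) (M1 : M (gone H))
  (Mm : forall x y, M x -> M y -> M (gmul H x y)) (Mi : forall x, M x -> M (ginv H x)) a b :
  cls H M a = cls H M b <-> M (gmul H (ginv H a) b).
Proof.
  split.
  - intros E. apply (f_equal (@proj1_sig _ _)) in E. simpl in E.
    assert (Hb : coset H M b b) by (unfold coset; rewrite gmul_Vl; exact M1).
    rewrite <- E in Hb. exact Hb.
  - intros m. unfold cls. apply subset_eq_compat. extensionality x.
    apply propositional_extensionality. unfold coset. split; intros h.
    + replace (gmul H (ginv H b) x) with (gmul H (ginv H (gmul H (ginv H a) b)) (gmul H (ginv H a) x))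
        by (gsimp; reflexivity).
      apply Mm; [apply Mi|]; assumption.
    + replace (gmul H (ginv H a) x) with (gmul H (gmul H (ginv H a) b) (gmul H (ginv H b) x))
        by (gsimp; reflexivity).
      apply Mm; assumption.
Qed.

Lemma quot_ex (H : Group) (M : H -> Prop) (M1 : M (gone H))
  (Mm : forall x y, M x -> M y -> M (gmul H x y)) (Mi : forall x, M x -> M (ginv H x))
  (Mc : forall t x, M x -> M (gmul H (gmul H t x) (ginv H t))) :
  exists (Hq : Group) (pi : H -> Hq), is_hom H Hq pi /\ surjective pi /\
    (forall a b, pi a = pi b <-> M (gmul H (ginv H a) b)).
Proof.
  assert (rc : forall a, cls H M (rep H M (cls H M a)) = cls H M a).
  { intros a. unfold cls at 2. apply subset_eq_compat. symmetry. apply (rep_spec H M (cls H M a)). }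
  assert (Ceq := cls_eq H M M1 Mm Mi).
  assert (qm : forall a b, qmul H M (cls H M a) (cls H M b) = cls H M (gmul H a b)).
  { intros a b. unfold qmul. set (a' := rep H M (cls H M a)). set (b' := rep H M (cls H M b)).
    assert (ea : M (gmul H (ginv H a') a)) by (apply Ceq; apply rc).
    assert (eb : M (gmul H (ginv H b') b)) by (apply Ceq; apply rc).
    apply Ceq.
    replace (gmul H (ginv H (gmul H a' b')) (gmul H a b)) with
      (gmul H (gmul H (gmul H (ginv H b') (gmul H (ginv H a') a)) (ginv H (ginv H b'))) (gmul H (ginv H b') b))
      by (gsimp; reflexivity).
    apply Mm; [apply Mc|]; assumption. }
  assert (qi : forall a, qinv H M (cls H M a) = cls H M (ginv H a)).
  { intros a. unfold qinv. set (a' := rep H M (cls H M a)).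
    assert (ea : M (gmul H (ginv H a) a')) by (apply Ceq; symmetry; apply rc).
    apply Ceq.
    replace (gmul H (ginv H (ginv H a')) (ginv H a)) with
      (gmul H (gmul H a (gmul H (ginv H a) a')) (ginv H a)) by (gsimp; reflexivity).
    apply Mc; assumption. }
  unshelve eexists {| carrier := qcar H M; gmul := qmul H M; gone := cls H M (gone H); ginv := qinv H M |}.
  - intros X Y Z. destruct (cls_surj H M X) as [x ->]. destruct (cls_surj H M Y) as [y ->].
    destruct (cls_surj H M Z) as [z ->]. rewrite !qm, gmul_assoc. reflexivity.
  - intros X. destruct (cls_surj H M X) as [x ->]. rewrite qm, gmul_1l. reflexivity.
  - intros X. destruct (cls_surj H M X) as [x ->]. rewrite qm, gmul_1r. reflexivity.
  - intros X. destruct (cls_surj H M X) as [x ->]. rewrite qi, qm, gmul_Vl. reflexivity.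
  - intros X. destruct (cls_surj H M X) as [x ->]. rewrite qi, qm, gmul_Vr. reflexivity.
  - exists (cls H M). split; [|split].
    + intros x y. simpl. symmetry. apply qm.
    + intros X. destruct (cls_surj H M X) as [x ->]. exists x. reflexivity.
    + intros a b. apply Ceq.
Qed.

Definition dec := excluded_middle_informative.

Definition Om (D1 D2 : Group) : Type := (carrier D1 * (Z * carrier D2))%type.
Definition rhoF (D1 D2 : Group) (d : D1) (p : Om D1 D2) : Om D1 D2 := (gmul D1 d (fst p), snd p).
Definition sigF (D1 D2 : Group) (z : D2) (p : Om D1 D2) : Om D1 D2 :=
  if dec (fst p = gone D1 /\ (0 <= fst (snd p))%Z) then (fst p, (fst (snd p), gmul D2 z (snd (snd p)))) else p.
Definition shF (D1 D2 : Group) (b : bool) (p : Om D1 D2) : Om D1 D2 :=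
  if dec (fst p = gone D1) then (fst p, ((if b then Z.succ else Z.pred) (fst (snd p)), snd (snd p))) else p.
Definition blk (D1 D2 : Group) (z : D2) (p : Om D1 D2) : Om D1 D2 :=
  if dec (fst p = gone D1 /\ fst (snd p) = 0%Z) then (fst p, (fst (snd p), gmul D2 z (snd (snd p)))) else p.

Inductive Gen (D1 D2 : Group) : Type :=
| GR : carrier D1 -> Gen D1 D2 | GS : carrier D2 -> Gen D1 D2 | GT : bool -> Gen D1 D2.
Arguments GR {D1 D2}. Arguments GS {D1 D2}. Arguments GT {D1 D2}.

Definition gf {D1 D2 : Group} (a : Gen D1 D2) : Om D1 D2 -> Om D1 D2 :=
  match a with GR d => rhoF D1 D2 d | GS z => sigF D1 D2 z | GT b => shF D1 D2 b end.
Definition ginvG {D1 D2 : Group} (a : Gen D1 D2) : Gen D1 D2 :=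
  match a with GR d => GR (ginv D1 d) | GS z => GS (ginv D2 z) | GT b => GT (negb b) end.

Ltac dsplit := repeat match goal with |- context [dec ?P] => destruct (dec P) end.

Lemma gf_inv {D1 D2 : Group} (a : Gen D1 D2) p : gf (ginvG a) (gf a p) = p.
Proof.
  destruct p as [x [n y]]. destruct a as [d|z|b]; simpl.
  - unfold rhoF; simpl. rewrite mulKl. reflexivity.
  - unfold sigF; simpl. dsplit; simpl in *; try rewrite mulKl; try reflexivity; tauto.
  - unfold shF; simpl. dsplit; simpl in *; try tauto; try reflexivity.
    destruct b; simpl; f_equal; f_equal; lia.
Qed.
Lemma ginvG_inv {D1 D2 : Group} (a : Gen D1 D2) : ginvG (ginvG a) = a.
Proof. destruct a; simpl; rewrite ?inv_inv, ?Bool.negb_involutive; reflexivity. Qed.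
Lemma gf_inv' {D1 D2 : Group} (a : Gen D1 D2) p : gf a (gf (ginvG a) p) = p.
Proof. rewrite <- (ginvG_inv a) at 1. apply gf_inv. Qed.

Definition eval {D1 D2 : Group} (w : list (Gen D1 D2)) (p : Om D1 D2) : Om D1 D2 :=
  fold_right (fun a q => gf a q) p w.
Definition winv {D1 D2 : Group} (w : list (Gen D1 D2)) := rev (map ginvG w).
Lemma eval_app {D1 D2 : Group} (w1 w2 : list (Gen D1 D2)) p : eval (w1 ++ w2) p = eval w1 (eval w2 p).
Proof. unfold eval. apply fold_right_app. Qed.
Lemma eval_winv_l {D1 D2 : Group} (w : list (Gen D1 D2)) p : eval (winv w) (eval w p) = p.
Proof.
  induction w as [|a w IH]; [reflexivity|]. unfold winv; simpl. rewrite eval_app.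
  simpl. change (fold_right (fun a q => gf a q) p w) with (eval w p). rewrite gf_inv. apply IH.
Qed.
Lemma eval_winv_r {D1 D2 : Group} (w : list (Gen D1 D2)) p : eval w (eval (winv w) p) = p.
Proof.
  revert p. induction w as [|a w IH]; intros p; [reflexivity|]. unfold winv; simpl. rewrite eval_app.
  simpl. change (fold_right (fun a q => gf a q) ?r w) with (eval w r).
  change (eval (rev (map ginvG w)) ?r) with (eval (winv w) r). rewrite IH. apply gf_inv'.
Qed.

Definition Scar (D1 D2 : Group) := {f : Om D1 D2 -> Om D1 D2 | exists w, forall p, f p = eval w p}.
Definition smul {D1 D2} (s t : Scar D1 D2) : Scar D1 D2.
Proof.
  exists (fun p => proj1_sig s (proj1_sig t p)).
  destruct (proj2_sig s) as [w1 h1]. destruct (proj2_sig t) as [w2 h2].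
  exists (w1 ++ w2). intros p. rewrite eval_app, h2, h1. reflexivity.
Defined.
Definition sone {D1 D2} : Scar D1 D2.
Proof. exists (fun p => p). exists []. intros p. reflexivity. Defined.
Definition swrd {D1 D2} (s : Scar D1 D2) : list (Gen D1 D2) :=
  proj1_sig (constructive_indefinite_description _ (proj2_sig s)).
Lemma swrd_spec {D1 D2} (s : Scar D1 D2) p : proj1_sig s p = eval (swrd s) p.
Proof. unfold swrd. destruct constructive_indefinite_description as [w h]. apply h. Qed.
Definition sinv {D1 D2} (s : Scar D1 D2) : Scar D1 D2.
Proof. exists (eval (winv (swrd s))). exists (winv (swrd s)). intros p. reflexivity. Defined.

Definition SG (D1 D2 : Group) : Group.
Proof.
  refine {| carrier := Scar D1 D2; gmul := smul; gone := sone; ginv := sinv |}.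
  - intros [x px] [y py] [z pz]. apply subset_eq_compat. reflexivity.
  - intros [x px]. apply subset_eq_compat. reflexivity.
  - intros [x px]. apply subset_eq_compat. reflexivity.
  - intros s. apply subset_eq_compat. extensionality p. simpl. rewrite swrd_spec. apply eval_winv_l.
  - intros s. apply subset_eq_compat. extensionality p. simpl. rewrite swrd_spec. apply eval_winv_r.
Defined.

Definition genS {D1 D2} (a : Gen D1 D2) : SG D1 D2.
Proof. exists (gf a). exists [a]. intros p. reflexivity. Defined.

Fixpoint codeL (l : list nat) : nat :=
  match l with [] => 0 | a :: l => S (Cantor.to_nat (a, codeL l)) end.
Lemma codeL_inj l1 l2 : codeL l1 = codeL l2 -> l1 = l2.
Proof.
  revert l2; induction l1 as [|a l1 IH]; intros [|b l2]; cbn [codeL]; try discriminate; auto.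
  intros E. apply Nat.succ_inj in E. assert (E2 := f_equal Cantor.of_nat E). rewrite !Cantor.cancel_of_to in E2. clear E. rename E2 into E.
  injection E as -> E. f_equal. apply IH, E.
Qed.
Lemma map_inj {A B} (f : A -> B) : injective f -> forall l1 l2, map f l1 = map f l2 -> l1 = l2.
Proof.
  intros hf l1; induction l1 as [|a l1 IH]; intros [|b l2]; simpl; try discriminate; auto.
  intros E; injection E as E1 E2. f_equal; auto.
Qed.

Lemma SG_countable (D1 D2 : Group) : countable D1 -> countable D2 -> countable (SG D1 D2).
Proof.
  intros [f1 i1] [f2 i2].
  set (cG := fun a : Gen D1 D2 => match a with GR d => 3 * f1 d | GS z => 3 * f2 z + 1
                                    | GT b => if b then 2 else 5 end).
  assert (ci : injective cG).
  { intros [d|z|b] [d'|z'|[|]]; try destruct b; simpl; intros E; try lia; try reflexivity;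
    f_equal; [apply i1|apply i2]; lia. }
  exists (fun s => codeL (map cG (swrd s))).
  intros s t E. apply codeL_inj in E. apply (map_inj cG ci) in E.
  destruct s as [fs ps], t as [ft pt]. apply subset_eq_compat. extensionality p.
  pose proof (swrd_spec (exist _ fs ps) p) as h1. pose proof (swrd_spec (exist _ ft pt) p) as h2.
  simpl in h1, h2. rewrite h1, h2, E. reflexivity.
Qed.

Lemma fst_sig {D1 D2 : Group} (z : D2) (p : Om D1 D2) : fst (sigF D1 D2 z p) = fst p.
Proof. unfold sigF. dsplit; reflexivity. Qed.
Lemma fst_sh {D1 D2 : Group} b (p : Om D1 D2) : fst (shF D1 D2 b p) = fst p.
Proof. unfold shF. dsplit; reflexivity. Qed.
Lemma sig_fix {D1 D2 : Group} (z : D2) (p : Om D1 D2) : fst p <> gone D1 -> sigF D1 D2 z p = p.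
Proof. intros h. unfold sigF. dsplit; tauto. Qed.
Lemma sh_fix {D1 D2 : Group} b (p : Om D1 D2) : fst p <> gone D1 -> shF D1 D2 b p = p.
Proof. intros h. unfold shF. dsplit; tauto. Qed.

Lemma blk_eq {D1 D2 : Group} (z : D2) (p : Om D1 D2) :
  blk D1 D2 z p = sigF D1 D2 z (shF D1 D2 true (sigF D1 D2 (ginv D2 z) (shF D1 D2 false p))).
Proof.
  destruct p as [x [n y]]. unfold blk, sigF, shF; simpl.
  dsplit; simpl in *; rewrite ?Z.succ_pred; try reflexivity; try (exfalso; intuition lia);
    try (f_equal; f_equal; gsimp; reflexivity).
  all: try (exfalso; intuition; lia).
Qed.

Lemma comm_lem {D1 D2 : Group} (d : D1) (z : D2) (q : Om D1 D2) : d <> gone D1 ->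
  rhoF D1 D2 d (sigF D1 D2 z (rhoF D1 D2 (ginv D1 d) (shF D1 D2 true q))) =
  shF D1 D2 true (rhoF D1 D2 d (sigF D1 D2 z (rhoF D1 D2 (ginv D1 d) q))).
Proof.
  intros dn. destruct (classic (fst q = gone D1)) as [e|ne].
  - assert (nd : forall r : Om D1 D2, fst r = gone D1 -> fst (rhoF D1 D2 (ginv D1 d) r) <> gone D1).
    { intros r er h. simpl in h. rewrite er, gmul_1r in h. apply dn.
      rewrite <- (inv_inv D1 d), h. apply inv_one. }
    rewrite (sig_fix _ _ (nd _ ltac:(rewrite fst_sh; exact e))).
    rewrite (sig_fix _ _ (nd _ e)).
    change (rhoF D1 D2 d (rhoF D1 D2 (ginv D1 d) ?r)) with (gf (GR d) (gf (ginvG (GR d)) r)).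
    rewrite !gf_inv'. reflexivity.
  - rewrite (sh_fix _ q ne). rewrite sh_fix; [reflexivity|].
    simpl. rewrite fst_sig. simpl. rewrite mulKr. exact ne.
Qed.

Lemma key (D1 D2 : Group) : countable D1 -> countable D2 ->
  exists (S : Group) (rho : D1 -> S) (sg : D2 -> S),
    countable S /\ is_hom D1 S rho /\ injective rho /\ is_hom D2 S sg /\ injective sg /\
    forall P : S -> Prop,
      (forall x y, P x -> P y -> P (gmul S x y)) ->
      (forall x, P x -> P (ginv S x)) ->
      (forall t x, P x -> P (gmul S (gmul S t x) (ginv S t))) ->
      forall d, d <> gone D1 -> P (rho d) -> forall z, P (sg z).
Proof.
  intros c1 c2. exists (SG D1 D2), (fun d => genS (GR d)).
  assert (bm : forall z : D2, exists w, forall p, blk D1 D2 z p = eval w p).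
  { intros z. exists [GS z; GT true; GS (ginv D2 z); GT false]. intros p. apply blk_eq. }
  exists (fun z => exist _ (blk D1 D2 z) (bm z)).
  split; [apply SG_countable; assumption|].
  split; [|split; [|split; [|split]]].
  - intros x y. apply subset_eq_compat. extensionality p. destruct p as [u r].
    simpl; unfold rhoF; simpl. rewrite gmul_assoc. reflexivity.
  - intros x y E. apply (f_equal (fun s : SG D1 D2 => proj1_sig s (gone D1, (0%Z, gone D2)))) in E.
    simpl in E. unfold rhoF in E; simpl in E. injection E as E. rewrite !gmul_1r in E. exact E.
  - intros x y. apply subset_eq_compat. extensionality p. destruct p as [u [n v]].
    unfold blk; simpl. dsplit; simpl in *; try tauto; try rewrite gmul_assoc; reflexivity.
  - intros x y E. apply (f_equal (fun s : SG D1 D2 => proj1_sig s (gone D1, (0%Z, gone D2)))) in E.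
    simpl in E. revert E. unfold blk; simpl. dsplit; try tauto.
    intros E. injection E as E. rewrite !gmul_1r in E. exact E.
  - intros P Pm Pi Pc d dn Pd z.
    set (S := SG D1 D2).
    assert (conjP : forall t t' x : S, gmul S t t' = gone S -> P x -> P (gmul S (gmul S t x) t')).
    { intros t t' x E Px. rewrite (inv_uniq S t t' E). apply Pc, Px. }
    set (g := genS (GR d) : S). set (g' := genS (GR (ginv D1 d)) : S).
    set (a := genS (GS z) : S). set (a' := genS (GS (ginv D2 z)) : S).
    set (b := genS (GT true) : S). set (b' := genS (GT false) : S).
    assert (gg : gmul S g g' = gone S).
    { apply subset_eq_compat. extensionality p. apply (gf_inv' (GR d)). }
    assert (aa : gmul S a a' = gone S).
    { apply subset_eq_compat. extensionality p. apply (gf_inv' (GS z)). }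
    assert (bb : gmul S b b' = gone S).
    { apply subset_eq_compat. extensionality p. apply (gf_inv' (GT true)). }
    assert (baab : gmul S (gmul S b a) (gmul S a' b') = gone S).
    { apply subset_eq_compat. extensionality p. simpl.
      change (sigF D1 D2 z (sigF D1 D2 (ginv D2 z) ?r)) with (gf (GS z) (gf (ginvG (GS z)) r)).
      rewrite gf_inv'. apply (gf_inv' (GT true)). }
    assert (Pg' : P g').
    { rewrite (inv_uniq S g g' gg). apply Pi. exact Pd. }
    assert (Pua : P (gmul S (gmul S (gmul S a g) a') g')) by (apply Pm; [apply conjP|]; assumption).
    assert (Pub : P (gmul S (gmul S (gmul S b g) b') g')) by (apply Pm; [apply conjP|]; assumption).
    assert (Pw : P (gmul S g (gmul S (gmul S (gmul S b a) g') (gmul S a' b'))))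
      by (apply Pm; [|apply conjP]; assumption).
    assert (Eq : exist _ (blk D1 D2 z) (bm z) =
      gmul S (gmul S (gmul S (gmul S (gmul S a g) a') g') (gmul S (gmul S (gmul S b g) b') g'))
        (gmul S g (gmul S (gmul S (gmul S b a) g') (gmul S a' b')))).
    { apply subset_eq_compat. extensionality p. simpl.
      change (rhoF D1 D2 (ginv D1 d) (rhoF D1 D2 d ?r)) with (gf (ginvG (GR d)) (gf (GR d) r)).
      rewrite gf_inv.
      change (shF D1 D2 false (shF D1 D2 true ?r)) with (gf (ginvG (GT true)) (gf (GT true) r)).
      rewrite gf_inv.
      rewrite comm_lem by exact dn.
      change (rhoF D1 D2 (ginv D1 d) (rhoF D1 D2 d ?r)) with (gf (ginvG (GR d)) (gf (GR d) r)).
      rewrite gf_inv.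
      change (sigF D1 D2 (ginv D2 z) (sigF D1 D2 z ?r)) with (gf (ginvG (GS z)) (gf (GS z) r)).
      rewrite gf_inv.
      change (rhoF D1 D2 d (rhoF D1 D2 (ginv D1 d) ?r)) with (gf (GR d) (gf (ginvG (GR d)) r)).
      rewrite gf_inv'.
      apply blk_eq. }
    simpl. rewrite Eq. apply Pm; [apply Pm|]; assumption.
Qed.

Theorem lemma1p12 (N G Q : Group) (i : N -> G) (p : G -> Q) :
  short_exact N G Q i p -> SQ_universal G ->
  SQ_universal N \/ SQ_universal Q.
Proof.
  intros [ih [ph [iinj [psurj ex]]]] HG.
  destruct (classic (SQ_universal N)) as [hN|hN]; [left; exact hN|].
  destruct (classic (SQ_universal Q)) as [hQ|hQ]; [right; exact hQ|].
  exfalso. unfold SQ_universal in hN, hQ.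
  apply not_all_ex_not in hN as [C2 hC2]. apply imply_to_and in hC2 as [cC2 nC2].
  apply not_all_ex_not in hQ as [C1 hC1]. apply imply_to_and in hC1 as [cC1 nC1].
  destruct (key C1 C2 cC1 cC2) as (S & rho & sg & cS & rh & ri & sh & si & Hkey).
  destruct (HG S cS) as (H & q & qh & qs & e & eh & ei).
  assert (kerp : forall g g' : G, p g = p g' -> exists n, i n = gmul G (ginv G g) g').
  { intros g g' E. apply ex. rewrite ph, (hom_inv _ _ _ g ph), E. apply gmul_Vl. }
  set (M := fun h : H => exists n, q (i n) = h).
  assert (M1 : M (gone H)).
  { exists (gone N). rewrite (hom1 _ _ _ ih), (hom1 _ _ _ qh). reflexivity. }
  assert (Mm : forall x y, M x -> M y -> M (gmul H x y)).
  { intros x y [n1 <-] [n2 <-]. exists (gmul N n1 n2). rewrite ih, qh. reflexivity. }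
  assert (Mi : forall x, M x -> M (ginv H x)).
  { intros x [n <-]. exists (ginv N n). rewrite (hom_inv _ _ _ _ ih), (hom_inv _ _ _ _ qh). reflexivity. }
  assert (Mc : forall t x, M x -> M (gmul H (gmul H t x) (ginv H t))).
  { intros t x [n <-]. destruct (qs t) as [g <-].
    assert (E : p (gmul G (gmul G g (i n)) (ginv G g)) = gone Q).
    { rewrite ph, ph, (hom_inv _ _ _ _ ph).
      rewrite (proj2 (ex (i n)) (ex_intro _ n eq_refl)), gmul_1r, gmul_Vr. reflexivity. }
    apply ex in E as [n' En']. exists n'. rewrite En', qh, qh, (hom_inv _ _ _ _ qh). reflexivity. }
  destruct (classic (exists d, d <> gone C1 /\ M (e (rho d)))) as [[d [dn Md]] | nd].
  - assert (Hz : forall z, M (e (sg z))).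
    { intro z. apply (Hkey (fun s => M (e s))) with d; try assumption.
      + intros x y. rewrite eh. apply Mm.
      + intros x. rewrite (hom_inv _ _ _ _ eh). apply Mi.
      + intros t x Px. rewrite eh, eh, (hom_inv _ _ _ _ eh). apply Mc; assumption. }
    apply nC2. exists (subG H M M1 Mm Mi).
    exists (fun n => exist M (q (i n)) (ex_intro _ n eq_refl)).
    split; [|split].
    + intros x y. apply subset_eq_compat. simpl. rewrite ih, qh. reflexivity.
    + intros [h [n Hn]]. exists n. apply subset_eq_compat. exact Hn.
    + exists (fun z => exist M (e (sg z)) (Hz z)). split.
      * intros x y; apply subset_eq_compat; simpl; rewrite sh, eh; reflexivity.
      * intros x y E. apply (f_equal (@proj1_sig _ _)) in E. simpl in E. apply si, ei, E.
  - destruct (quot_ex H M M1 Mm Mi Mc) as (Hq & pi & pih & pis & pik).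
    set (phi := fun x : Q => pi (q (proj1_sig (constructive_indefinite_description _ (psurj x))))).
    apply nC1. exists Hq, phi. split; [|split].
    + intros x y. unfold phi.
      destruct (constructive_indefinite_description _ (psurj (gmul Q x y))) as [gxy Exy].
      destruct (constructive_indefinite_description _ (psurj x)) as [gx Ex].
      destruct (constructive_indefinite_description _ (psurj y)) as [gy Ey]. simpl.
      rewrite <- pih, <- qh. apply pik.
      assert (E : p gxy = p (gmul G gx gy)) by (rewrite ph, Ex, Ey; exact Exy).
      destruct (kerp _ _ E) as [n En]. exists n. rewrite En, qh, (hom_inv _ _ _ _ qh). reflexivity.
    + intros X. destruct (pis X) as [h <-]. destruct (qs h) as [g <-]. exists (p g). unfold phi.
      destruct (constructive_indefinite_description _ (psurj (p g))) as [g' E]. simpl.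
      apply pik. destruct (kerp _ _ E) as [n En]. exists n.
      rewrite En, qh, (hom_inv _ _ _ _ qh). reflexivity.
    + exists (fun c => pi (e (rho c))). split.
      * intros x y. rewrite rh, eh, pih. reflexivity.
      * intros x y E. apply pik in E.
        rewrite <- (hom_inv _ _ _ _ eh), <- eh, <- (hom_inv _ _ _ _ rh), <- rh in E.
        destruct (classic (gmul C1 (ginv C1 x) y = gone C1)) as [E1|E1].
        -- rewrite <- (mulKr C1 x y), E1, gmul_1r. reflexivity.
        -- exfalso. apply nd. exists (gmul C1 (ginv C1 x) y). split; assumption.
Qed.
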